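(* Let \(D\) be a tangle diagram and \(i \mapsto g_i,\ j \mapsto u_j\) be a decorated shadow \(\mathrm{SL}(2,\mathbb{C})\)-coloring of \(D\) (corresponding to the representation \(\rho\) with \(\rho(w_i)=g_i\)), with \(u_0\) the shadow of the topmost region. Let \(\chi\) be the associated octahedral coloring. Then its holonomy agrees with \(\rho\) in the sense that \[ \mathrm{hol}_{\chi, u_0}(w_i) = \rho(w_i) \] for each Wirtinger generator \(w_i\).
   Context: Setting. \(D\) is a diagram of an oriented tangle \(T\); \(\pi(D)\) is the Wirtinger presentation of the fundamental group of the complement, with one generator \(w_i\) per arc (each segment \(i\) has generator \(w_i\)) and relations \(w_{2'} = w_1^{-1} w_2 w_1\) at positive crossings and \(w_{1'} = w_2 w_1 w_2^{-1}\) at negative crossings. For a segment \(i\), \(\uparrow i\) denotes the region above it and \(\downarrow i\) the region below it (w.r.t. the orientation of the segment). Decorated shadow coloring: each segment \(i\) gets \(g_i \in \mathrm{SL}(2,\mathbb{C})\) satisfying the Wirtinger relations and a line \(L_i \subset \mathbb{C}^2\) of row vectors with \(L_i g_i = L_i\), with \(L_{2'} = L_2 g_1\) (positive crossing) and \(L_{1'} = L_1 g_2\) (negative crossing); each region \(j\) gets a nonzero column vector \(u_j\), with \(u_{j'} = g_i u_j\) when \(j'\) is below \(j\) across \(i\). Associated octahedral coloring: choose nonzero \(v_i \in L_i\) and let \(m_i\) satisfy \(v_i g_i = m_i^{-1} v_i\). Assuming admissibility (\(\det(u_j, e_2) \ne 0\) for all regions \(j\), and \(v_i e_2 \ne 0\),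 \(v_i u_{\uparrow i} \ne 0\) for all segments \(i\), where \(e_1,e_2\) are the standard column basis vectors), set \(\chi_i = (a_i,b_i,m_i) = \left( \frac{\det(u_{\downarrow i}, e_2)}{\det(u_{\uparrow i}, e_2)},\ -\frac{v_i e_2}{v_i u_{\uparrow i}},\ m_i\right)\). Holonomy. For an octahedral color \(\chi=(a,b,m)\) let \(\chi^{\uparrow} = \begin{bmatrix} a & 0 \\ (a-1/m)/b & 1\end{bmatrix}\), \(\chi^{\downarrow} = \begin{bmatrix} 1 & (a-m)b \\ 0 & a\end{bmatrix}\), and for a column vector \(u = (u^1,u^2)^{\mathrm T}\) let \(u^{\uparrow} = \begin{bmatrix} u^1 & 0 \\ u^2 & 1\end{bmatrix}\). The fundamental groupoid \(\Pi(D)\) has one object per region and generators \(x_i^{+}\), \(x_i^{-}\) for each segment \(i\) (paths from \(\uparrow i\) to \(\downarrow i\) passing over, respectively under, the segment). The holonomy functor \(\mathrm{Hol}_\chi : \Pi(D) \to \mathrm{GL}(2,\mathbb{C})\) sends \(x_i^+ \mapsto \chi_i^{\uparrow}\) and \(x_i^- \mapsto \chi_i^{\downarrow}\). For a region \(j\), \(s_j^+\) is the over path from the topmost region \(0\) to \(j\) (passing over every strand). The functor \(\mathcal{F}: \pi(D) \to \Pi(D)\) is \(\mathcal{F}(w_i) = s^+_{\uparrow i}\, x_i^+ (x_i^-)^{-1}\, (s^+_{\uparrow i})^{-1}\). Finally \(\mathrm{hol}_{\chi,u_0}(w_i) = u_0^{\uparrow}\, \mathrm{Hol}_\chi(\mathcal{F}(w_i))\,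 (u_0^{\uparrow})^{-1}\). *)

(* Defs.v *)
From mathcomp Require Import all_boot all_algebra.
From mathcomp Require Import complex reals.
Set Implicit Arguments. Unset Strict Implicit. Unset Printing Implicit Defensive.
Import GRing.Theory.
Local Open Scope ring_scope.

(* Combinatorial data of an oriented tangle diagram D.
   - seg    : the segments of D (pieces of strand between crossings),
   - reg    : the regions of D (complementary regions of the diagram),
   - cross  : the crossings of D,
   - above i / below i : the regions  (up-arrow i) and (down-arrow i)
     on either side of segment i (w.r.t. the orientation of i),
   - top    : the topmost region 0,
   - at a crossing c the over-strand enters along over_in c and leaves
     along over_out c; the under-strand enters along under_in c and
     leaves along under_out c; csign c = true iff c is positive. *)
Record diagram := Diagram {
  seg : finType;
  reg : finType;
  cross : finType;
  above : seg -> reg;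
  below : seg -> reg;
  top : reg;
  over_in : cross -> seg;
  over_out : cross -> seg;
  under_in : cross -> seg;
  under_out : cross -> seg;
  csign : cross -> bool
}.

Section Defs.
Variable C : fieldType.

Definition mx2 (a b c d : C) : 'M[C]_2 :=
  \matrix_(i < 2, j < 2)
    if (i : nat) == 0%N then (if (j : nat) == 0%N then a else b)
    else (if (j : nat) == 0%N then c else d).

Definition e2 : 'cV[C]_2 := delta_mx 1 0.

Definition det_e2 (u : 'cV[C]_2) : C := \det (row_mx u e2 : 'M[C]_2).

Definition chi_up (a b m : C) : 'M[C]_2 := mx2 a 0 ((a - m^-1) / b) 1.
Definition chi_down (a b m : C) : 'M[C]_2 := mx2 1 ((a - m) * b) 0 a.

Definition u_up (u : 'cV[C]_2) : 'M[C]_2 := mx2 (u 0 0) 0 (u 1 0) 1.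
End Defs.

Section Paths.
Variable D : diagram.

(* An over path in Pi(D) is a word in the generators x_i^+ and their
   inverses: (i, true) stands for x_i^+ (from above i to below i, passing
   over i) and (i, false) for (x_i^+)^-1 (from below i to above i). *)
Fixpoint is_over_path (r : reg D) (p : seq (seg D * bool)) (t : reg D) : bool :=
  match p with
  | [::] => r == t
  | (i, true) :: p' => (above i == r) && is_over_path (below i) p' t
  | (i, false) :: p' => (below i == r) && is_over_path (above i) p' t
  end.

Variable C : fieldType.
(* Holonomy of an over path, given the images X i = Hol(x_i^+); the holonomy
   functor is covariant: Hol(p q) = Hol(p) Hol(q). *)
Fixpoint hol_path (X : seg D -> 'M[C]_2) (p : seq (seg D * bool)) : 'M[C]_2 :=
  match p with
  | [::] => 1%:M
  | (i, true) :: p' => X i *m hol_path X p'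
  | (i, false) :: p' => invmx (X i) *m hol_path X p'
  end.
End Paths.

Section Octahedral.
Variable D : diagram.
Variable C : fieldType.
Variables (u : reg D -> 'cV[C]_2) (v : seg D -> 'rV[C]_2) (m : seg D -> C).

Definition oct_a (i : seg D) : C := det_e2 (u (below i)) / det_e2 (u (above i)).
Definition oct_b (i : seg D) : C :=
  - ((v i *m e2 C) 0 0 / (v i *m u (above i)) 0 0).
Definition chi_up_of (i : seg D) : 'M[C]_2 := chi_up (oct_a i) (oct_b i) (m i).
Definition chi_down_of (i : seg D) : 'M[C]_2 := chi_down (oct_a i) (oct_b i) (m i).

(* hol_{chi,u_0}(w_i) = u_0^up Hol_chi(F(w_i)) (u_0^up)^-1, where
   F(w_i) = s x_i^+ (x_i^-)^-1 s^-1 and s is the over path from the topmost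
   region to (above i) given as the word p. *)
Definition hol_w (p : seq (seg D * bool)) (i : seg D) : 'M[C]_2 :=
  let H := hol_path chi_up_of p in
  u_up (u (top D)) *m H *m chi_up_of i *m invmx (chi_down_of i) *m invmx H
    *m invmx (u_up (u (top D))).
End Octahedral.

(* Main.v *)
Require Import Defs.
From mathcomp Require Import all_boot all_algebra.
From mathcomp Require Import complex reals.
From mathcomp Require Import ring.
Import GRing.Theory.
Local Open Scope ring_scope.
Lemma ord2P (i : 'I_2) : i = 0 \/ i = 1.
Proof. case: i => [[|[|k]] Hk]; [left|right|by []]; by apply/val_inj. Qed.

Section M.
Variable C : fieldType.
Implicit Types (a b c d : C).

Lemma mx2E (A : 'M[C]_2) : A = mx2 (A 0 0) (A 0 1) (A 1 0) (A 1 1).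
Proof. by apply/matrixP => i j; rewrite mxE; case: (ord2P i) => ->; case: (ord2P j) => ->. Qed.

Lemma mx2_00 a b c d : mx2 a b c d 0 0 = a. Proof. by rewrite mxE. Qed.
Lemma mx2_01 a b c d : mx2 a b c d 0 1 = b. Proof. by rewrite mxE. Qed.
Lemma mx2_10 a b c d : mx2 a b c d 1 0 = c. Proof. by rewrite mxE. Qed.
Lemma mx2_11 a b c d : mx2 a b c d 1 1 = d. Proof. by rewrite mxE. Qed.

Lemma sum2 (F : 'I_2 -> C) : \sum_(k < 2) F k = F 0 + F 1.
Proof.
rewrite !big_ord_recl big_ord0 addr0.
by congr (F _ + F _); apply/val_inj.
Qed.

Lemma mx2_mul a b c d a' b' c' d' :
  mx2 a b c d *m mx2 a' b' c' d' =
  mx2 (a*a' + b*c') (a*b' + b*d') (c*a' + d*c') (c*b' + d*d').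
Proof.
apply/matrixP => i j; rewrite !mxE sum2 !mxE.
by case: (ord2P i) => ->; case: (ord2P j) => ->.
Qed.

Lemma det2 (A : 'M[C]_2) : \det A = A 0 0 * A 1 1 - A 0 1 * A 1 0.
Proof.
rewrite (expand_det_row _ 0) !big_ord_recl big_ord0 /cofactor !det_mx11 !mxE /=.
have E1 : lift 0 0 = 1 :> 'I_2 by apply/val_inj.
have E3 : lift ord0 ord0 = 1 :> 'I_2 by apply/val_inj.
have E4 : lift (lift ord0 ord0) 0 = 0 :> 'I_2 by apply/val_inj.
have E5 : ord0 = 0 :> 'I_2 by apply/val_inj.
rewrite ?E4 ?E1 ?E3 ?E5 /bump /= expr0 expr1.
ring.
Qed.

Lemma det_mx2 a b c d : \det (mx2 a b c d) = a * d - b * c.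
Proof. by rewrite det2 mx2_00 mx2_01 mx2_10 mx2_11. Qed.

Lemma mulcv0 (A : 'M[C]_2) (x : 'cV[C]_2) : (A *m x) 0 0 = A 0 0 * x 0 0 + A 0 1 * x 1 0.
Proof. by rewrite mxE sum2. Qed.
Lemma mulcv1 (A : 'M[C]_2) (x : 'cV[C]_2) : (A *m x) 1 0 = A 1 0 * x 0 0 + A 1 1 * x 1 0.
Proof. by rewrite mxE sum2. Qed.
Lemma mulrv (v : 'rV[C]_2) (A : 'M[C]_(2, 1)) : (v *m A) 0 0 = v 0 0 * A 0 0 + v 0 1 * A 1 0.
Proof. by rewrite mxE sum2. Qed.
Lemma mulrm (v : 'rV[C]_2) (A : 'M[C]_2) j : (v *m A) 0 j = v 0 0 * A 0 j + v 0 1 * A 1 j.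
Proof. by rewrite mxE sum2. Qed.

Lemma e2_0 : e2 C 0 0 = 0. Proof. by rewrite mxE. Qed.
Lemma e2_1 : e2 C 1 0 = 1. Proof. by rewrite mxE. Qed.

Lemma det_e2E (x : 'cV[C]_2) : det_e2 x = x 0 0.
Proof.
rewrite /det_e2 det2.
have -> : (row_mx x (e2 C)) 0 0 = x 0 0.
  by have := row_mxEl x (e2 C) 0 0; rewrite (_ : lshift 1 0 = 0) //; apply/val_inj.
have -> : (row_mx x (e2 C)) 1 0 = x 1 0.
  by have := row_mxEl x (e2 C) 1 0; rewrite (_ : lshift 1 0 = 0) //; apply/val_inj.
have -> : (row_mx x (e2 C)) 0 1 = 0.
  by have := row_mxEr x (e2 C) 0 0; rewrite (_ : rshift 1 0 = 1) ?e2_0 //; apply/val_inj.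
have -> : (row_mx x (e2 C)) 1 1 = 1.
  by have := row_mxEr x (e2 C) 1 0; rewrite (_ : rshift 1 0 = 1) ?e2_1 //; apply/val_inj.
by rewrite mulr1 mul0r subr0.
Qed.
End M.
Ltac fld := field; rewrite ?andbT ?oppr_eq0; repeat (apply/andP; split); try done.
Lemma core {C : fieldType} (g00 g01 g10 g11 x0 x1 v0 v1 m : C) :
 g00*g11 - g01*g10 = 1 ->
 v0*g00 + v1*g10 = m^-1 * v0 -> v0*g01 + v1*g11 = m^-1 * v1 ->
 x0 != 0 -> v1 != 0 -> v0*x0 + v1*x1 != 0 ->
 let y0 := g00*x0 + g01*x1 in let y1 := g10*x0+g11*x1 in
 let a := y0/x0 in let b := -(v1/(v0*x0+v1*x1)) in
 [/\ m != 0, y1 = x1 * a + (a - m^-1)/b,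
     y0*((a-m)*b) + g01*a = 0 &
     y1*((a-m)*b) + g11*a = 1].
Proof.
move=> Hdet He1 He2 Hx0 Hv1 Hvx.
have Hm : m != 0.
  apply/eqP => m0; move: He1 He2; rewrite m0 invr0 !mul0r => He1 He2.
  have : v1 = 0.
    transitivity (v1 * (g00*g11 - g01*g10)); first by rewrite Hdet mulr1.
    transitivity (g00 * (v0*g01 + v1*g11) - g01 * (v0*g00 + v1*g10)); first by ring.
    by rewrite He1 He2; ring.
  by move/eqP; rewrite (negbTE Hv1).
have Hg10 : g10 = (m^-1*v0 - v0*g00)/v1 by rewrite -He1; fld.
have Hg11 : g11 = (m^-1*v1 - v0*g01)/v1 by rewrite -He2; fld.
subst g10 g11.
have H' : m^-1*(g00*v1 - g01*v0) = v1.
  transitivity ((g00 * ((m^-1*v1 - v0*g01)/v1) - g01*((m^-1*v0 - v0*g00)/v1)) * v1).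
    by fld.
  by rewrite Hdet mul1r.
have H'' : g00 = m + g01*v0/v1.
  have -> : g00 = (g00*v1 - g01*v0)/v1 + g01*v0/v1 by field.
  have H2 : g00*v1 - g01*v0 = m*v1 by apply/(mulfI (invr_neq0 Hm)); rewrite H' mulrA mulVf // mul1r.
  by rewrite H2; fld.
subst g00; cbv zeta; split => //; fld.

Qed.


Lemma seg_lemma (C : fieldType) (g : 'M[C]_2) (x : 'cV[C]_2) (v : 'rV[C]_2) (m : C) :
  \det g = 1 -> v *m g = m^-1 *: v -> x 0 0 != 0 -> (v *m e2 C) 0 0 != 0 ->
  (v *m x) 0 0 != 0 ->
  let a := det_e2 (g *m x) / det_e2 x in
  let b := - ((v *m e2 C) 0 0 / (v *m x) 0 0) in
  u_up x *m chi_up a b m = u_up (g *m x) /\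
  g *m u_up x *m chi_down a b m = u_up (g *m x).
Proof.
have [g00 [g01 [g10 [g11 ->]]]] : exists g00 g01 g10 g11, g = mx2 g00 g01 g10 g11.
  by do 4 eexists; exact: mx2E.
move=> Hdet Hev Hx0 Hv1 Hvx.
have He1 : v 0 0 * g00 + v 0 1 * g10 = m^-1 * v 0 0.
  by move: Hev => /matrixP/(_ 0 0); rewrite mulrm mx2_00 mx2_10 mxE.
have He2 : v 0 0 * g01 + v 0 1 * g11 = m^-1 * v 0 1.
  by move: Hev => /matrixP/(_ 0 1); rewrite mulrm mx2_01 mx2_11 mxE.
move: Hdet Hv1 Hvx; rewrite det_mx2 !mulrv e2_0 e2_1 mulr0 add0r mulr1 => Hdet Hv1 Hvx.
have [Hm c1 c2 c3] := core _ _ _ _ _ _ _ _ _ Hdet He1 He2 Hx0 Hv1 Hvx.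
cbv zeta; rewrite /u_up /chi_up /chi_down !det_e2E !mulcv0 !mulcv1 ?mulrv ?e2_0 ?e2_1 ?mulr0 ?add0r ?mulr1
  !mx2_00 !mx2_01 !mx2_10 !mx2_11 !mx2_mul.
split; congr mx2; rewrite ?mulr0 ?add0r ?mulr1 ?mul1r ?mul0r ?addr0 ?c2 ?c3 //; rewrite ?c1; fld.
Qed.

Lemma invmxM2 (C : fieldType) (A B : 'M[C]_2) : A \in unitmx -> B \in unitmx ->
  invmx (A *m B) = invmx B *m invmx A.
Proof.
move=> uA uB.
have uAB : A *m B \in unitmx by rewrite unitmx_mul uA uB.
symmetry; transitivity (invmx (A *m B) *m (A *m B) *m (invmx B *m invmx A)).
  by rewrite mulVmx // mul1mx.
by rewrite -!mulmxA (mulmxA B) mulmxV // mul1mx mulmxV // mulmx1.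
Qed.

Theorem theoremA (R : realType) (D : diagram)
  (g : seg D -> 'M[R[i]]_2) (L : seg D -> 'rV[R[i]]_2)
  (u : reg D -> 'cV[R[i]]_2)
  (v : seg D -> 'rV[R[i]]_2) (m : seg D -> R[i]) :
  (* decorated shadow SL(2,C)-coloring: segments *)
  (forall i, \det (g i) = 1) ->
  (forall i, L i != 0) ->
  (forall i, (L i *m g i == L i)%MS) ->
  (* Wirtinger relations at crossings, and the lines L *)
  (forall c : cross D,
     [/\ g (over_out c) = g (over_in c),
         (L (over_out c) == L (over_in c))%MS,
         g (under_out c) =
           (if csign c then invmx (g (over_in c)) *m g (under_in c) *m g (over_in c)
            else g (over_in c) *m g (under_in c) *m invmx (g (over_in c)))
       & (L (under_out c) == L (under_in c) *m g (over_in c))%MS]) ->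
  (* regions *)
  (forall j, u j != 0) ->
  (forall i, u (below i) = g i *m u (above i)) ->
  (* choice of v_i in L_i and of m_i *)
  (forall i, v i != 0 /\ (v i <= L i)%MS) ->
  (forall i, v i *m g i = (m i)^-1 *: v i) ->
  (* admissibility *)
  (forall j, det_e2 (u j) != 0) ->
  (forall i, (v i *m e2 _) 0 0 != 0) ->
  (forall i, (v i *m u (above i)) 0 0 != 0) ->
  (* conclusion: hol_{chi,u_0}(w_i) = rho(w_i) = g_i, for any over path s^+ *)
  forall (i : seg D) (p : seq (seg D * bool)),
    is_over_path (top D) p (above i) ->
    hol_w u v m p i = g i.
Proof.
move=> Hdet _ _ _ _ Hub Hv Hev Hdu Hve Hvu i p Hp.
have Hunit_up : forall j, u_up (u j) \in unitmx.
  by move=> j; rewrite unitmxE /u_up det_mx2 mulr1 mul0r subr0 unitfE -det_e2E.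
have Hseg : forall k,
    u_up (u (above k)) *m chi_up_of u v m k = u_up (u (below k)) /\
    g k *m u_up (u (above k)) *m chi_down_of u v m k = u_up (u (below k)).
  move=> k; rewrite /chi_up_of /chi_down_of /oct_a /oct_b Hub.
  apply: seg_lemma; [exact: Hdet | exact: Hev | by rewrite -det_e2E | exact: Hve | exact: Hvu].
have Hcu : forall k, chi_up_of u v m k \in unitmx.
  by move=> k; have := Hunit_up (below k); rewrite -(Hseg k).1 unitmx_mul => /andP[].
have Hcd : forall k, chi_down_of u v m k \in unitmx.
  by move=> k; have := Hunit_up (below k); rewrite -(Hseg k).2 unitmx_mul => /andP[].
have Hpath : forall p r t, is_over_path r p t ->
    u_up (u r) *m hol_path (chi_up_of u v m) p = u_up (u t).
  elim=> [|[k []] q IH] r t /=.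
  - by move/eqP => ->; rewrite mulmx1.
  - by case/andP => /eqP <- Hq; rewrite mulmxA (Hseg k).1; exact: IH.
  - case/andP => /eqP <- Hq; rewrite mulmxA.
    have -> : u_up (u (below k)) *m invmx (chi_up_of u v m k) = u_up (u (above k)).
      by rewrite -(Hseg k).1 mulmxK.
    exact: IH.
rewrite /hol_w.
set U0 := u_up (u (top D)).
set H := hol_path (chi_up_of u v m) p.
have HUa : U0 *m H = u_up (u (above i)) by exact: Hpath.
have uH : H \in unitmx.
  by have := Hunit_up (above i); rewrite -HUa unitmx_mul => /andP[].
have uU0 : U0 \in unitmx by exact: Hunit_up.
rewrite HUa (Hseg i).1 -mulmxA -invmxM2 // HUa -(Hseg i).2 mulmxK // mulmxK //.
Qed.
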